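(* For every prime $p$ there exists a cyclic skew-symmetric linear $(2,p,p)$-AONT: that is, there exist $\tau\in\mathbb{F}_p$ and a $p\times p$ matrix $M$ over $\mathbb{F}_p$ such that $M$ is invertible, every $2\times2$ submatrix of $M$ is invertible, $M$ is in type $p$ standard form, $M$ is $\tau$-skew-symmetric, and $M$ is cyclic.
   Context: A linear $(t,s,q)$-AONT is given by an invertible $s\times s$ matrix $M$ over $\mathbb{F}_q$ (transform $(y_1,\dots,y_s)=(x_1,\dots,x_s)M^{-1}$); $M$ defines one iff every $t\times t$ submatrix is invertible. A $q\times q$ matrix $M$ (rows/columns indexed $1,\dots,q$) is in type $q$ standard form if all its diagonal entries are $0$ and all off-diagonal entries of the first row and first column are $1$. Such an $M$ is $\tau$-skew-symmetric if $M(i,j)+M(j,i)=\tau$ for all $2\le i,j\le q$ with $i\ne j$, and it is cyclic if its lower right $(q-1)\times(q-1)$ submatrix is a circulant matrix (each row is the cyclic shift by one position to the right of the previous row). ''Skew-symmetric'' means $\tau$-skew-symmetric for some $\tau$. *)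

(* Defs.v *)
From mathcomp Require Import all_boot all_algebra.
Set Implicit Arguments. Unset Strict Implicit. Unset Printing Implicit Defensive.
Import GRing.Theory.
Local Open Scope ring_scope.

(* Rows/columns are indexed by 'I_n = {0,...,n-1}; the paper's index k
   (1 <= k <= n) corresponds to our index k-1. *)

Section AONT.
Variables (F : fieldType) (n : nat).

Definition all_tsub_invertible (t : nat) (M : 'M[F]_n) : Prop :=
  forall (f g : 'I_t -> 'I_n), injective f -> injective g ->
    mxsub f g M \in unitmx.

Definition linear_AONT (t : nat) (M : 'M[F]_n) : Prop :=
  M \in unitmx /\ all_tsub_invertible t M.

Definition std_form (M : 'M[F]_n) : Prop :=
  (forall i : 'I_n, M i i = 0) /\
  (forall i j : 'I_n, nat_of_ord i = 0%N -> nat_of_ord j != 0%N ->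
      M i j = 1 /\ M j i = 1).

Definition skew_sym (tau : F) (M : 'M[F]_n) : Prop :=
  forall i j : 'I_n, nat_of_ord i != 0%N -> nat_of_ord j != 0%N -> i != j ->
    M i j + M j i = tau.

Definition csucc (j : nat) : nat := if (j.+1 < n)%N then j.+1 else 1%N.

(* the lower-right (n-1)x(n-1) block is circulant: each row is the
   cyclic right shift by one of the previous row. *)
Definition cyclic_mx (M : 'M[F]_n) : Prop :=
  forall i i' j j' : 'I_n, (0 < i)%N -> (0 < j)%N ->
    nat_of_ord i' = i.+1 -> nat_of_ord j' = csucc j ->
    M i' j' = M i j.

End AONT.

(* Main.v *)
Require Import Defs.
From mathcomp Require Import all_boot all_algebra.
From mathcomp Require Import all_field all_solvable.
From mathcomp Require Import ring zify perm.
Import GRing.Theory.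
Local Open Scope ring_scope.

Set Implicit Arguments. Unset Strict Implicit.

Ltac fside := (repeat (apply/andP; split)); assumption.

Ltac nz := (repeat (apply: mulf_neq0 || rewrite invr_eq0)); assumption.

Lemma det2 (R : comNzRingType) (A : 'M[R]_2) : \det A = A 0 0 * A 1 1 - A 0 1 * A 1 0.
Proof.
rewrite (expand_det_row _ 0) !big_ord_recl big_ord0 /cofactor !det_mx11 !mxE /=.
rewrite expr0 expr1 !mul1r mulN1r addr0 mulrN.
by congr (A _ _ * A _ _ - A _ _ * A _ _); apply/val_inj.
Qed.

Section Gen.
Variable F : fieldType.
Definition E (a b : F) : F := if a == b then 0 else if b == 0 then 1 else b / (b - a).

Lemma E_diag a : E a a = 0.
Proof. by rewrite /E eqxx. Qed.

Lemma subr_neq0 {a b : F} : a != b -> a - b != 0.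
Proof. by rewrite subr_eq0. Qed.

Lemma E_off {a b} : a != b -> b != 0 -> E a b = b / (b - a).
Proof. by move=> ab b0; rewrite /E (negbTE ab) (negbTE b0). Qed.

Lemma E_off0 {a} : a != 0 -> E a 0 = 1.
Proof. by move=> a0; rewrite /E (negbTE a0) eqxx. Qed.

Lemma E_neq0 a b : a != b -> E a b != 0.
Proof.
move=> ab; have [b0|b0] := eqVneq b 0; first by rewrite b0 E_off0 ?oner_neq0 // -b0.
by rewrite E_off // mulf_neq0 // invr_eq0 subr_neq0 // eq_sym.
Qed.

Lemma E_skew a b : a != b -> a != 0 -> b != 0 -> E a b + E b a = 1.
Proof.
move=> ab a0 b0; rewrite !E_off // 1?eq_sym //.
have h1 := subr_neq0 ab; have h2 : b - a != 0 by rewrite subr_neq0 // eq_sym.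
by field; fside.
Qed.

Lemma E_scale c a b : c != 0 -> E (c * a) (c * b) = E a b.
Proof.
move=> c0; rewrite /E (inj_eq (mulfI c0)) mulf_eq0 (negbTE c0) /=.
case: eqVneq => // ab; case: eqVneq => // b0.
by rewrite -mulrBr invfM mulrACA divff // mul1r.
Qed.

Lemma E_det a1 a2 b1 b2 : a1 != a2 -> b1 != b2 ->
  E a1 b1 * E a2 b2 - E a1 b2 * E a2 b1 != 0.
Proof.
move=> ha hb.
have [e11|n11] := eqVneq a1 b1.
  by subst b1; rewrite E_diag mul0r sub0r oppr_eq0 mulf_neq0 // E_neq0 // eq_sym.
have [e22|n22] := eqVneq a2 b2.
  by subst b2; rewrite E_diag mulr0 sub0r oppr_eq0 mulf_neq0 // E_neq0 // eq_sym.
have [e12|n12] := eqVneq a1 b2.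
  by subst b2; rewrite E_diag mul0r subr0 mulf_neq0 // E_neq0.
have [e21|n21] := eqVneq a2 b1.
  by subst b1; rewrite E_diag mulr0 subr0 mulf_neq0 // E_neq0.
have [z1|nz1] := eqVneq b1 0.
  subst b1; have b20 : b2 != 0 by rewrite eq_sym.
  rewrite (E_off0 n11) (E_off0 n21) !E_off // mul1r mulr1.
  have h1 : a2 - a1 != 0 by rewrite subr_neq0 // eq_sym.
  have h2 : b2 - a2 != 0 by rewrite subr_neq0 // eq_sym.
  have h3 : b2 - a1 != 0 by rewrite subr_neq0 // eq_sym.
  have -> : b2 / (b2 - a2) - b2 / (b2 - a1) = b2 * (a2 - a1) / ((b2 - a2) * (b2 - a1)).
    by field; fside.
  by nz.
have [z2|nz2] := eqVneq b2 0.
  subst b2.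
  rewrite (E_off0 n22) (E_off0 n12) !E_off // mul1r mulr1.
  have h1 : a1 - a2 != 0 by rewrite subr_neq0.
  have h2 : b1 - a2 != 0 by rewrite subr_neq0 // eq_sym.
  have h3 : b1 - a1 != 0 by rewrite subr_neq0 // eq_sym.
  have -> : b1 / (b1 - a1) - b1 / (b1 - a2) = b1 * (a1 - a2) / ((b1 - a1) * (b1 - a2)).
    by field; fside.
  by nz.
rewrite !E_off //.
have h11 : b1 - a1 != 0 by rewrite subr_neq0 // eq_sym.
have h22 : b2 - a2 != 0 by rewrite subr_neq0 // eq_sym.
have h12 : b2 - a1 != 0 by rewrite subr_neq0 // eq_sym.
have h21 : b1 - a2 != 0 by rewrite subr_neq0 // eq_sym.
have h1 : a1 - a2 != 0 by rewrite subr_neq0.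
have h2 : b2 - b1 != 0 by rewrite subr_neq0 // eq_sym.
have -> : b1 / (b1 - a1) * (b2 / (b2 - a2)) - b2 / (b2 - a1) * (b1 / (b1 - a2))
  = b1 * b2 * (b2 - b1) * (a1 - a2) / ((b1 - a1) * (b2 - a2) * (b2 - a1) * (b1 - a2)).
  by field; fside.
by nz.
Qed.

Section Poly.
Variables (n : nat) (hn : (0 < n)%N) (hchar : (n.+1)%:R = 0 :> F)
  (hfrob : forall c : F, c ^+ n.+1 = c) (hbin : ('C(n.+1, 2))%:R = 0 :> F).

Lemma fermat1 {c : F} : c != 0 -> c ^+ n = 1.
Proof.
move=> c0; apply: (mulfI c0); rewrite mulr1 -exprS; exact: hfrob.
Qed.

Definition PS (a b : F) :=
  \sum_(0 <= k < n) (k.+1)%:R * a ^+ k * b ^+ (n - k) + a ^+ n - a ^+ n * b ^+ n.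

Lemma PS_E (a b : F) : PS a b = E a b.
Proof.
rewrite /PS; have [<-|ab] := eqVneq a b.
  rewrite E_diag.
  rewrite (eq_big_nat _ _ (F2 := fun k => (k.+1)%:R * a ^+ n)); last first.
    by move=> k /andP[_ kn]; rewrite -mulrA -exprD subnKC // ltnW.
  rewrite -mulr_suml -natr_sum.
  have -> : (\sum_(0 <= i < n) i.+1)%N = 'C(n.+1, 2).
    by rewrite -bin2_sum big_nat_recl //= add0n.
  rewrite hbin mul0r add0r.
  have [->|a0] := eqVneq a 0; first by rewrite expr0n (gtn_eqF hn) mul0r subrr.
  by rewrite fermat1 // mul1r subrr.
have [b0|b0] := eqVneq b 0.
  subst b; rewrite E_off0 // big1_seq ?add0r.
    by rewrite expr0n (gtn_eqF hn) mulr0 subr0 fermat1.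
  move=> k /andP[_]; rewrite mem_index_iota => /andP[_ kn].
  by rewrite expr0n subn_eq0 leqNgt kn mulr0.
rewrite E_off // (fermat1 b0) mulr1 -addrA subrr addr0.
have hba : b - a != 0 by rewrite subr_eq0 eq_sym.
apply: (mulfI hba); rewrite [RHS]mulrC divfK // mulr_sumr.
pose u k := k%:R * a ^+ k * b ^+ (n.+1 - k).
rewrite (eq_big_nat _ _ (F2 := fun k => a ^+ k * b ^+ (n.+1 - k) - (u k.+1 - u k))); last first.
  move=> k /andP[_ kn]; rewrite /u subSS (subSn (ltnW kn)); move: (n - k)%N => m.
  by rewrite !exprS -natr1; ring.
rewrite sumrB telescope_sumr //.
have hn1 : n%:R = -1 :> F by apply/eqP; rewrite -addr_eq0 natr1 hchar.
rewrite /u subSnn subn0 mulr0n !mul0r subr0 hn1 expr1.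
have -> : \sum_(0 <= i < n) a ^+ i * b ^+ (n.+1 - i) = b * \sum_(0 <= i < n) a ^+ i * b ^+ (n - i).
  rewrite mulr_sumr; apply: eq_big_nat => k /andP[_ kn]; rewrite (subSn (ltnW kn)).
  by move: (n - k)%N => m; rewrite exprS; ring.
have G : \sum_(0 <= i < n.+1) a ^+ i * b ^+ (n - i) = 1.
  apply: (mulfI hba); rewrite mulr1; symmetry; rewrite -{1}(hfrob b) -{1}(hfrob a) subrXX big_mkord.
  by congr (_ * _); apply: eq_bigr => i _; rewrite mulrC.
rewrite -[RHS]mulr1 -[X in _ = b * X]G big_nat_recr //= subnn expr0 mulr1.
ring.
Qed.
End Poly.
End Gen.

Unset Implicit Arguments. Set Strict Implicit.

Section Mat.
Variables (p : nat) (hp : prime p) (z : 'F_p) (hz : (p.-1).-primitive_root z).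

Let n := p.-1.
Let hpn : p = n.+1. Proof. by rewrite /n prednK // prime_gt0. Qed.
Let p_gt0 : (0 < p)%N. Proof. exact: prime_gt0. Qed.

Definition xv (i : 'I_p) : 'F_p := if (i == 0%N :> nat) then 0 else z ^+ i.-1.

Lemma z_neq0 : z != 0.
Proof. by rewrite (prim_root_eq0 hz) -lt0n /n -subn1 subn_gt0 prime_gt1. Qed.

Lemma xv_eq0 i : (xv i == 0) = (i == 0%N :> nat).
Proof.
rewrite /xv; case: ifP => _; first by rewrite eqxx.
by rewrite expf_eq0 (negbTE z_neq0) andbF.
Qed.

Lemma xv_inj : injective xv.
Proof.
move=> i j; rewrite /xv.
case: (eqVneq (i : nat) 0%N) => [i0|i0]; case: (eqVneq (j : nat) 0%N) => [j0|j0] //.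
- by move=> _; apply/val_inj; rewrite /= i0 j0.
- by move=> /esym /eqP; rewrite expf_eq0 (negbTE z_neq0) andbF.
- by move=> /eqP; rewrite expf_eq0 (negbTE z_neq0) andbF.
move=> /eqP; rewrite (eq_prim_root_expr hz) !modn_small.
- by move/eqP => h; apply/val_inj; have := congr1 S h; rewrite !prednK ?lt0n.
- by move: (ltn_ord j) j0; lia.
by move: (ltn_ord i) i0; lia.
Qed.

Definition Mx : 'M['F_p]_p := \matrix_(i, j) E (xv i) (xv j).

Lemma Mx_std : std_form Mx.
Proof.
split=> [i|i j i0 j0]; first by rewrite mxE E_diag.
have xi : xv i = 0 by rewrite /xv i0 eqxx.
have xj : xv j != 0 by rewrite xv_eq0.
have x0j : 0 != xv j by rewrite eq_sym.
by rewrite !mxE xi E_off0 // (E_off x0j xj) oppr0 addr0 divff.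
Qed.

Lemma Mx_skew : skew_sym 1 Mx.
Proof.
move=> i j i0 j0 ij; rewrite !mxE E_skew ?xv_eq0 // (inj_eq xv_inj) //.
Qed.

Lemma xv_succ {i i' : 'I_p} : (0 < i)%N -> nat_of_ord i' = i.+1 -> xv i' = z * xv i.
Proof.
move=> i0 e; rewrite /xv e /= (negbTE (lt0n_neq0 i0)) -exprS prednK //.
Qed.

Lemma Mx_cyclic : cyclic_mx Mx.
Proof.
move=> i i' j j' i0 j0 ei ej; rewrite !mxE (xv_succ i0 ei).
suff -> : xv j' = z * xv j by rewrite E_scale // z_neq0.
move: ej; rewrite /csucc; case: ifP => [_|hj] ej; first exact: xv_succ.
have ej1 : nat_of_ord j = p.-1.
  by move: (ltn_ord j) (negbT hj); rewrite -leqNgt; lia.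
rewrite /xv ej /= (negbTE (lt0n_neq0 j0)) ej1 expr0 -exprS prednK; last by rewrite -ej1.
by apply/esym; apply: (prim_expr_order hz).
Qed.

Lemma Mx_sub2 : all_tsub_invertible 2 Mx.
Proof.
move=> f g fi gi; rewrite unitmxE unitfE det2 !mxE.
apply: E_det; rewrite (inj_eq xv_inj).
  by apply/eqP => /fi /(congr1 val).
by apply/eqP => /gi /(congr1 val).
Qed.

Section Unit.
Hypothesis p_gt2 : (2 < p)%N.

Let n_gt0 : (0 < n)%N. Proof. by rewrite /n; lia. Qed.

Definition dn (k : nat) : 'F_p := if k == n then 1 else (k.+1)%:R.
Definition Vm : 'M['F_p]_p := \matrix_(k < p, j < p) xv j ^+ k.
Definition Wm : 'M['F_p]_p := \matrix_(k < p, j < p) xv j ^+ (n - k).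
Definition Tm : 'M['F_p]_p := \matrix_(l < p, k < p)
  (if l == k then dn k else if (l == n :> nat) && (k == 0%N :> nat) then -1 else 0).

Let hnp : (n < p)%N. Proof. by rewrite /n; lia. Qed.
Let imax : 'I_p := Ordinal hnp.
Let i0 : 'I_p := Ordinal p_gt0.

Lemma VT i k : (Vm^T *m Tm) i k = xv i ^+ k * dn k - (if k == 0%N :> nat then xv i ^+ n else 0).
Proof.
rewrite mxE (bigD1 k) //= !mxE eqxx.
case: (eqVneq (k : nat) 0%N) => k0.
  have imk : imax != k by apply/eqP => /(congr1 val) /=; rewrite k0 /n; lia.
  rewrite (bigD1 imax) //= !mxE (negbTE imk) eqxx k0 /= big1 ?addr0 ?mulrN1 //.
  move=> l /andP[lk lim]; rewrite !mxE (negbTE lk).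
  have -> : (l == n :> nat) = false by apply/negbTE; apply: contra lim => /eqP e; apply/eqP/val_inj.
  by rewrite mulr0.
rewrite big1 ?addr0 ?subr0 //.
by move=> l lk; rewrite !mxE (negbTE lk) (negbTE k0) andbF mulr0.
Qed.

Let hfrob (c : 'F_p) : c ^+ n.+1 = c.
Proof. by rewrite -hpn -{2}(expf_card c) card_Fp. Qed.
Let hchar : (n.+1)%:R = 0 :> 'F_p.
Proof. by rewrite -hpn pchar_Fp_0. Qed.
Let hbin : ('C(n.+1, 2))%:R = 0 :> 'F_p.
Proof. by apply/eqP; rewrite -hpn -(dvdn_pcharf (pchar_Fp hp)) prime_dvd_bin. Qed.

Lemma Mx_fact : Mx = Vm^T *m Tm *m Wm.
Proof.
apply/matrixP => i j; rewrite !mxE.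
under eq_bigr do rewrite VT mxE mulrBl.
rewrite sumrB [X in _ - X](bigD1 i0) //= [X in _ - (_ + X)]big1 ?addr0; last first.
  by move=> k k0; rewrite ifN ?mul0r //; apply: contra k0 => /eqP e; apply/eqP/val_inj.
rewrite subn0 -(PS_E n_gt0 hchar hfrob hbin) /PS.
rewrite -(big_mkord xpredT (fun k => xv i ^+ k * dn k * xv j ^+ (n - k))).
rewrite (_ : index_iota 0 p = index_iota 0 n.+1); last by rewrite -hpn.
rewrite big_nat_recr //= /dn eqxx subnn expr0 !mulr1; congr (_ + _ - _).
apply: eq_big_nat => k /andP[_ kn]; rewrite (ltn_eqF kn).
by rewrite [_%:R * _]mulrC.
Qed.

Lemma Vm_unit : Vm \in unitmx.
Proof.
have -> : Vm = Vandermonde p (\row_j xv j) by apply/matrixP => k j; rewrite !mxE.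
rewrite unitmxE det_Vandermonde unitfE; apply/prodf_neq0 => k _; apply/prodf_neq0 => j kj.
rewrite !mxE subr_eq0 (inj_eq xv_inj); apply/eqP => /(congr1 val) /= e.
by rewrite e ltnn in kj.
Qed.

Lemma Wm_unit : Wm \in unitmx.
Proof.
have -> : Wm = row_perm (perm (@rev_ord_inj p)) Vm.
  apply/matrixP => k j; rewrite !mxE permE /=; congr (_ ^+ _); rewrite /n.
  by move: (ltn_ord k); lia.
by rewrite row_permE unitmx_mul unitmx_perm Vm_unit.
Qed.

Lemma Tm_unit : Tm \in unitmx.
Proof.
have tT : is_trig_mx Tm.
  apply/is_trig_mxP => l k lk; rewrite mxE.
  have -> : (l == k) = false by apply/negbTE; apply/eqP => e; rewrite e ltnn in lk.
  have -> : (k == 0%N :> nat) = false by apply/negbTE; rewrite -lt0n; exact: leq_ltn_trans (leq0n l) lk.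
  by rewrite andbF.
rewrite unitmxE (det_trig tT) unitfE; apply/prodf_neq0 => k _; rewrite mxE eqxx /dn.
case: ifP => [_|/negbT kn]; first exact: oner_neq0.
rewrite -(dvdn_pcharf (pchar_Fp hp)) gtnNdvd //.
by move: (ltn_ord k) kn; rewrite /n; lia.
Qed.

Lemma Mx_unit3 : Mx \in unitmx.
Proof. by rewrite Mx_fact !unitmx_mul unitmx_tr Vm_unit Tm_unit Wm_unit. Qed.
End Unit.
End Mat.

Lemma unit_of_sub2 (F : fieldType) n (M : 'M[F]_n) : n = 2%N -> all_tsub_invertible 2 M -> M \in unitmx.
Proof.
move=> e; subst n => H; have := H id id (fun _ _ => id) (fun _ _ => id).
by rewrite mxsub_id.
Qed.


Theorem corollary2p21 (p : nat) (hp : prime p) :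
  exists (tau : 'F_p) (M : 'M['F_p]_p),
    linear_AONT 2 M /\ std_form M /\ skew_sym tau M /\ cyclic_mx M.
Proof.
have p1 : (0 < p.-1)%N by move: (prime_gt1 hp); lia.
have [z zrs hz] : exists2 z, z \in enum (predC1 (0 : 'F_p)) & (p.-1).-primitive_root z.
  apply/hasP; apply: has_prim_root => //.
  - apply/allP => c; rewrite mem_enum /= => c0; apply/unity_rootP.
    apply: (mulfI c0); rewrite mulr1 -exprS prednK ?prime_gt0 //.
    by rewrite -{2}(expf_card c) card_Fp.
  - exact: enum_uniq.
  by rewrite -cardE cardC1 card_Fp.
exists 1, (Mx p z); split; [split|split; [|split]].
- have [p2|p2] := leqP p 2.
    apply: unit_of_sub2; first by move: (prime_gt1 hp) p2; lia.
    exact: Mx_sub2.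
  exact: Mx_unit3.
- exact: Mx_sub2.
- by apply: Mx_std.
- by apply: Mx_skew.
exact: Mx_cyclic.
Qed.
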